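(* Let $q=[\alpha:\beta:\gamma]\in\mathcal C_0$ with $\beta\neq\gamma$ (i.e. $q\notin\mathcal H_0$), let $\mathcal H_q=\{\alpha x+\beta y-2\gamma z=0\}$ be the tangent line to $\mathcal C_0$ at $q$, and $$\mathcal C_q^{(4,1,1)}=\{(\beta-2\gamma)^2x^2+(3\beta^2-4\beta\gamma+2\gamma^2)y^2+2\alpha\beta xy-4\alpha\gamma xz-4\beta\gamma yz+4\beta(2\gamma-\beta)z^2=0\}.$$ Then the conics $Q\subset\mathbb P^2(\mathbb C)$ (possibly reducible or non-reduced) such that $Q\cap\mathcal C_0=\{q\}$ set-theoretically and $Q$ meets $\mathcal H_0$ in a single point without containing it, are exactly $2\mathcal H_q$ and $\mathcal C_q^{(4,1,1)}$; they meet $\mathcal H_0$ at $[2\gamma-\beta:\alpha:\alpha]$ and $[\alpha:2\gamma-\beta:2\gamma-\beta]$ respectively.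
   Context: In $\mathbb P^2(\mathbb C)$ with coordinates $[x:y:z]$: $\mathcal C_0=\{x^2+y^2-2z^2=0\}$ (a smooth conic) and $\mathcal H_0=\{y-z=0\}$ (a line). For a plane curve given by $f=0$ with $f$ a square of a linear form $\ell$, $2\{\ell=0\}$ denotes the double line. *)

(* Defs.v *)
(* The complex projective plane P^2(C) is modelled with
   C := complex R (= R[i]) for R : realType (the real numbers). *)
From HB Require Import structures.
From mathcomp Require Import all_boot all_order all_algebra.
From mathcomp Require Import complex.
From mathcomp Require Export reals.
Set Implicit Arguments. Unset Strict Implicit. Unset Printing Implicit Defensive.
Import Order.TTheory GRing.Theory Num.Theory.
Local Open Scope ring_scope.

(* Homogeneous coordinates [x:y:z] are represented by triples ((x, y), z). *)
Definition hcoord (F : Type) := (F * F * F)%type.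

Definition hzero (F : pzRingType) : hcoord F := (0, 0, 0).

Definition same_point (F : pzRingType) (u v : hcoord F) : Prop :=
  exists2 k : F, k != 0 & v = (k * u.1.1, k * u.1.2, k * u.2).

(* A plane conic: a nonzero quadratic form
   cxx x^2 + cyy y^2 + czz z^2 + cxy xy + cxz xz + cyz yz, up to scalars. *)
Record conic (F : Type) := Conic { cxx : F; cyy : F; czz : F; cxy : F; cxz : F; cyz : F }.

Definition conic_eval (F : pzRingType) (Q : conic F) (p : hcoord F) : F :=
  let: (x, y, z) := p in
  cxx Q * x ^+ 2 + cyy Q * y ^+ 2 + czz Q * z ^+ 2
  + cxy Q * (x * y) + cxz Q * (x * z) + cyz Q * (y * z).

Definition conic_nonzero (F : pzRingType) (Q : conic F) : Prop :=
  ~ (cxx Q = 0 /\ cyy Q = 0 /\ czz Q = 0 /\ cxy Q = 0 /\ cxz Q = 0 /\ cyz Q = 0).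

Definition conic_scale (F : pzRingType) (k : F) (Q : conic F) : conic F :=
  Conic (k * cxx Q) (k * cyy Q) (k * czz Q) (k * cxy Q) (k * cxz Q) (k * cyz Q).

(* Equality of conics (as curves possibly non-reduced): proportional equations. *)
Definition same_conic (F : pzRingType) (Q Q' : conic F) : Prop :=
  exists2 k : F, k != 0 & Q' = conic_scale k Q.

Definition double_line (F : pzRingType) (a b c : F) : conic F :=
  Conic (a ^+ 2) (b ^+ 2) (c ^+ 2) (2 * a * b) (2 * a * c) (2 * b * c).

Definition C0 (F : pzRingType) : conic F := Conic 1 1 (- 2) 0 0 0.

Definition on_H0 (F : pzRingType) (p : hcoord F) : Prop := p.1.2 = p.2.

Definition Cq411 (F : pzRingType) (a b c : F) : conic F :=
  Conic ((b - 2 * c) ^+ 2) (3 * b ^+ 2 - 4 * b * c + 2 * c ^+ 2)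
        (4 * b * (2 * c - b)) (2 * a * b) (- (4 * a * c)) (- (4 * b * c)).

Definition meets_C0_only_at (F : pzRingType) (Q : conic F) (q : hcoord F) : Prop :=
  forall p : hcoord F, p <> hzero F ->
    (conic_eval Q p = 0 /\ conic_eval (C0 F) p = 0) <-> same_point q p.

Definition meets_H0_only_at (F : pzRingType) (Q : conic F) (p0 : hcoord F) : Prop :=
  p0 <> hzero F /\
  forall p : hcoord F, p <> hzero F ->
    (conic_eval Q p = 0 /\ on_H0 p) <-> same_point p0 p.

Definition contains_H0 (F : pzRingType) (Q : conic F) : Prop :=
  forall p : hcoord F, on_H0 p -> conic_eval Q p = 0.

(* Main.v *)
Require Import Defs.
From HB Require Import structures.
From mathcomp Require Import all_boot all_order all_algebra.
From mathcomp Require Import complex.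
From mathcomp Require Import reals.
From mathcomp Require Import ring.
Import Order.TTheory GRing.Theory Num.Theory.
Set Implicit Arguments. Unset Strict Implicit. Unset Printing Implicit Defensive.
Local Open Scope ring_scope.

Section Gen.
Variable R : realType.
Local Notation C := R[i].

Definition pt (F : pzRingType) (s t : F) : hcoord F :=
  (s ^+ 2 - 2 * s * t - t ^+ 2, - s ^+ 2 - 2 * s * t + t ^+ 2, s ^+ 2 + t ^+ 2).

Lemma two_nz : (2 : C) != 0. Proof. by rewrite pnatr_eq0. Qed.

Lemma ev_scale (Q : conic C) k x y z :
  conic_eval Q (k * x, k * y, k * z) = k ^+ 2 * conic_eval Q (x, y, z).
Proof. rewrite /conic_eval; ring. Qed.

Lemma ev_scale_conic (Q : conic C) k p :
  conic_eval (conic_scale k Q) p = k * conic_eval Q p.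
Proof. case: p => [[x y] z]; rewrite /conic_eval /=; ring. Qed.

Lemma pt_hom (Q : conic C) k s t :
  conic_eval Q (pt (k * s) (k * t)) = k ^+ 4 * conic_eval Q (pt s t).
Proof.
rewrite /pt.
have -> : k ^+ 4 = (k ^+ 2) ^+ 2 by rewrite -exprM.
rewrite -ev_scale; congr conic_eval; congr (_, _, _); ring.
Qed.

Lemma pt_C0 s t : conic_eval (C0 C) (pt s t) = 0.
Proof. rewrite /conic_eval /pt /=; ring. Qed.

Lemma lc1 (x y1 c1 : C) : x = c1 * y1 -> y1 = 0 -> x = 0.
Proof. by move=> -> ->; rewrite mulr0. Qed.
Lemma lc2 (x y1 y2 c1 c2 : C) : x = c1 * y1 + c2 * y2 -> y1 = 0 -> y2 = 0 -> x = 0.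
Proof. by move=> -> -> ->; rewrite !mulr0 addr0. Qed.
Lemma lc4 (x y1 y2 y3 y4 c1 c2 c3 c4 : C) :
  x = c1 * y1 + c2 * y2 + c3 * y3 + c4 * y4 -> y1 = 0 -> y2 = 0 -> y3 = 0 -> y4 = 0 -> x = 0.
Proof. by move=> -> -> -> -> ->; rewrite !mulr0 !addr0. Qed.

Lemma lc3 (x y1 y2 y3 c1 c2 c3 : C) :
  x = c1 * y1 + c2 * y2 + c3 * y3 -> y1 = 0 -> y2 = 0 -> y3 = 0 -> x = 0.
Proof. by move=> -> -> -> ->; rewrite !mulr0 !addr0. Qed.

Lemma sq0 (x : C) : x ^+ 2 = 0 -> x = 0.
Proof. by move/eqP; rewrite expf_eq0 /= => /eqP. Qed.

Lemma pt_nz s t : ~ (s = 0 /\ t = 0) -> pt s t <> hzero C.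
Proof.
move=> hst [hx hy hz]; apply: hst.
have h1 : s ^+ 2 = 0.
  apply: (lc3 (c1 := 4^-1) (c2 := - 4^-1) (c3 := 2^-1) _ hx hy hz); by field.
have h2 : t ^+ 2 = 0 by move: hz; rewrite h1 add0r.
by split; apply: sq0.
Qed.

Lemma ker (Q : conic C) : (forall s t, conic_eval Q (pt s t) = 0) ->
  [/\ cyy Q = cxx Q, czz Q = - (2 * cxx Q), cxy Q = 0, cxz Q = 0 & cyz Q = 0].
Proof.
case: Q => A B Cc D E F /= H.
have e1 := H 1 0; have e2 := H 0 1; have e3 := H 1 1; have e4 := H 1 (-1);
have e5 := H 1 2.
move: e1 e2 e3 e4 e5; rewrite /conic_eval /pt /=.
move=> e1 e2 e3 e4 e5.
have hE : E = 0.
  apply: (lc4 (c1 := 4^-1) (c2 := - 4^-1) (c3 := - 16^-1) (c4 := 16^-1) _ e1 e2 e3 e4); by field.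
have hF : F = 0.
  apply: (lc4 (c1 := - 4^-1) (c2 := 4^-1) (c3 := - 16^-1) (c4 := 16^-1) _ e1 e2 e3 e4); by field.
subst E F.
have hD : D = 0.
  apply: (lc2 (c1 := - 2^-1) (c2 := 8^-1) _ e1 e4); by field.
subst D.
have hAB : B - A = 0.
  apply: (lc2 (c1 := - 24^-1) (c2 := 25 / 96) _ e5 e4); by field.
have hB : B = A by apply/eqP; rewrite -subr_eq0 hAB.
subst B.
have hC : Cc + 2 * A = 0.
  apply: (lc1 (c1 := 4^-1) _ e4); by field.
split => //; apply/eqP; rewrite -subr_eq0 opprK hC //.
Qed.

Lemma const_of_noroot (h : C -> C) (P : {poly C}) :
  (forall r, P.[r] = h r) -> (forall r, h r != 0) -> forall r, h r = h 0.
Proof.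
move=> hP hn r.
have hs : size P == 1%N.
  apply/negPn/negP => /closed_rootP [x /rootP]; rewrite hP => /eqP.
  by rewrite (negbTE (hn x)).
have := size1_polyC (eq_leq (eqP hs)) => hPc.
by rewrite -!hP hPc !hornerC.
Qed.

Lemma rm_conic (f : {rmorphism {poly C} -> C}) (Q : conic {poly C}) p :
  f (conic_eval Q p) =
  conic_eval (Conic (f (cxx Q)) (f (cyy Q)) (f (czz Q)) (f (cxy Q)) (f (cxz Q)) (f (cyz Q)))
    (f p.1.1, f p.1.2, f p.2).
Proof.
case: p => [[x y] z]; rewrite /conic_eval; cbv beta iota; cbn [fst snd].
rewrite !rmorphD !rmorphM ?rmorphXn //.
Qed.

Lemma rm_pt (f : {rmorphism {poly C} -> C}) s t :
  (f (pt s t).1.1, f (pt s t).1.2, f (pt s t).2) = pt (f s) (f t).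
Proof.
rewrite /pt; cbn [fst snd]; congr (_, _, _);
  by rewrite ?rmorphB ?rmorphD ?rmorphN !rmorphXn ?rmorphM ?rmorph_nat.
Qed.

Lemma rm_conic_h r (Q : conic {poly C}) p :
  (conic_eval Q p).[r] =
  conic_eval (Conic (cxx Q).[r] (cyy Q).[r] (czz Q).[r] (cxy Q).[r] (cxz Q).[r] (cyz Q).[r])
    (p.1.1.[r], p.1.2.[r], p.2.[r]).
Proof. exact: (rm_conic (horner_eval r) Q p). Qed.

Lemma rm_pt_h r (s t : {poly C}) : ((pt s t).1.1.[r], (pt s t).1.2.[r], (pt s t).2.[r]) = pt s.[r] t.[r].
Proof. exact: (rm_pt (horner_eval r) s t). Qed.

Lemma poly_eval (Q : conic C) (u v w : C) r :
  (conic_eval (Conic (cxx Q)%:P (cyy Q)%:P (czz Q)%:P (cxy Q)%:P (cxz Q)%:P (cyz Q)%:P)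
    (pt (u%:P * 'X) (v%:P * 'X + w%:P))).[r] = conic_eval Q (pt (u * r) (v * r + w)).
Proof.
rewrite rm_conic_h rm_pt_h.
have e1 : (u%:P * 'X).[r] = u * r by rewrite hornerCM hornerX.
have e2 : (v%:P * 'X + w%:P).[r] = v * r + w.
  by rewrite hornerD hornerCM hornerX hornerC.
rewrite e1 e2 !hornerC.
by case: Q.
Qed.

Lemma scale_H0 (Q : conic C) k p0 : k != 0 -> meets_H0_only_at Q p0 ->
  meets_H0_only_at (conic_scale k Q) p0.
Proof.
move=> kn [h0 H]; split => // p pn; rewrite -(H p pn) ev_scale_conic.
split => -[h1 h2]; split => //.
  by move/eqP: h1; rewrite mulf_eq0 (negbTE kn) /= => /eqP.
by rewrite h1 mulr0.
Qed.

Lemma scale_C0 (Q : conic C) k q : k != 0 -> meets_C0_only_at Q q ->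
  meets_C0_only_at (conic_scale k Q) q.
Proof.
move=> kn H p pn; rewrite -(H p pn) ev_scale_conic.
split => -[h1 h2]; split => //.
  by move/eqP: h1; rewrite mulf_eq0 (negbTE kn) /= => /eqP.
by rewrite h1 mulr0.
Qed.

Lemma scale_cont (Q : conic C) k : k != 0 -> ~ contains_H0 Q -> ~ contains_H0 (conic_scale k Q).
Proof.
move=> kn H hc; apply: H => p hp; have := hc p hp; rewrite ev_scale_conic.
by move/eqP; rewrite mulf_eq0 (negbTE kn) /= => /eqP.
Qed.

Lemma H0_gen (Q : conic C) u v :
  (forall x y, conic_eval Q (x, y, y) = (u * x + v * y) ^+ 2) -> ~ (u = 0 /\ v = 0) ->
  meets_H0_only_at Q (- v, u, u) /\ ~ contains_H0 Q.
Proof.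
move=> hQ huv; split; last first.
  move=> hc; apply: huv; split.
    by have := hc (1, 0, 0) erefl; rewrite hQ => /sq0; rewrite mulr1 mulr0 addr0.
  by have := hc (0, 1, 1) erefl; rewrite hQ => /sq0; rewrite mulr1 mulr0 add0r.
split.
  by rewrite /hzero; case=> h1 h2 _; apply: huv; split => //; rewrite -[v]opprK h1 oppr0.
case=> [[x y] z] pn; split.
  case=> h1; rewrite /on_H0 /= => h2; subst z; move: h1; rewrite hQ => /sq0 hl.
  have [u0|un] := eqVneq u 0.
    subst u; have vn : v != 0 by apply/eqP => v0; apply: huv.
    have y0 : y = 0 by move: hl; rewrite mul0r add0r => /eqP; rewrite mulf_eq0 (negbTE vn) => /eqP.
    subst y; have xn : x != 0 by apply/eqP => x0; subst x; apply: pn.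
    exists (- x / v).
      by rewrite mulf_neq0 // ?oppr_eq0 // invr_eq0.
    by congr (_, _, _); rewrite /= ?mulr0 //; field.
  have yn : y != 0.
    apply/eqP => y0; subst y; apply: pn; move: hl; rewrite mulr0 addr0 => /eqP.
    by rewrite mulf_eq0 (negbTE un) => /eqP ->.
  exists (y / u); first by rewrite mulf_neq0 // invr_eq0.
  have hx : x = - (v * y) / u.
    by transitivity ((u * x + v * y - v * y) / u); [field | rewrite hl sub0r].
  by congr (_, _, _); rewrite /= ?hx; field.
case=> k kn [-> -> ->]; split => //; rewrite hQ; apply/eqP; rewrite expf_eq0 /=; apply/eqP; ring.
Qed.

Lemma disc0 (Q : conic C) p0 al be ga :
  (forall x y, conic_eval Q (x, y, y) = al * x ^+ 2 + be * x * y + ga * y ^+ 2) ->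
  meets_H0_only_at Q p0 -> be ^+ 2 - 4 * al * ga = 0.
Proof.
move=> hQ [p0n H]; apply/eqP; apply: contraT => hD.
set D := be ^+ 2 - 4 * al * ga in hD.
pose d := sqrtC D.
have hd : d ^+ 2 = D by rewrite sqrtCK.
have dn : d != 0 by apply/eqP => d0; move: hD; rewrite -hd d0 expr0n /= eqxx.
have [a0|an] := eqVneq al 0.
  subst al; have bn : be != 0.
    apply/eqP => b0; have : D = 0 by rewrite /D b0; ring.
    by move/eqP; rewrite (negbTE hD).
  have h1 : same_point p0 (1, 0, 0).
    apply/H; [by rewrite /hzero; case=> /eqP; rewrite oner_eq0 | split=> //; rewrite hQ; ring].
  have h2 : same_point p0 (ga, - be, - be).
    apply/H; [by rewrite /hzero; case=> _ /eqP; rewrite oppr_eq0 (negbTE bn) | split=> //; rewrite hQ; ring].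
  case: h1 => k1 k1n [_ _ /esym/eqP]; rewrite mulf_eq0 (negbTE k1n) /= => /eqP e.
  case: h2 => k2 k2n [_ _]; rewrite e mulr0 => /eqP; rewrite oppr_eq0 (negbTE bn) //.
have root (x : C) : (2 * al * x + be) ^+ 2 = D -> conic_eval Q (x, 1, 1) = 0.
  move=> hx; rewrite hQ.
  have h4 : 4 * al != 0 by rewrite mulf_neq0 // pnatr_eq0.
  apply: (mulfI h4); rewrite mulr0.
  transitivity ((2 * al * x + be) ^+ 2 - D); first by rewrite /D; ring.
  by rewrite hx subrr.
have h2a : 2 * al != 0 by rewrite mulf_neq0 // pnatr_eq0.
have r1 : conic_eval Q ((- be + d) / (2 * al), 1, 1) = 0.
  by apply: root; rewrite mulrCA divff // mulr1 -hd; ring.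
have r2 : conic_eval Q ((- be - d) / (2 * al), 1, 1) = 0.
  by apply: root; rewrite mulrCA divff // mulr1 -hd; ring.
have nz (x : C) : (x, 1, 1) <> hzero C by rewrite /hzero; case=> _ /eqP; rewrite oner_eq0.
have := (H _ (nz _)).1 (conj r1 erefl); have := (H _ (nz _)).1 (conj r2 erefl).
case=> k1 _ [e1 _ f1]; case=> k2 _ [e2 _ f2].
have ek : k1 = k2 by apply: (mulIf (x := p0.2)); [apply/eqP => z; move: f1; rewrite z mulr0; apply/eqP; rewrite oner_eq0 | rewrite -f1 -f2].
have : (- be - d) / (2 * al) = (- be + d) / (2 * al) by rewrite e1 e2 ek.
move/(congr1 (fun t => t * (2 * al))); rewrite !divfK // => /eqP.
rewrite -subr_eq0 opprD addrACA subrr add0r -opprD oppr_eq0 -mulr2n -mulr_natl mulf_eq0.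
by rewrite pnatr_eq0 (negbTE dn).
Qed.
End Gen.

Section Main.
Variable R : realType.
Local Notation C := R[i].
Variables a b c : C.
Hypothesis hq : (a, b, c) <> hzero C.
Hypothesis hE : a ^+ 2 + b ^+ 2 - 2 * c ^+ 2 = 0.
Hypothesis hbc : b != c.

Ltac modE W := apply/eqP; rewrite -subr_eq0; apply/eqP;
  transitivity ((a ^+ 2 + b ^+ 2 - 2 * c ^+ 2) * W); [ring | by rewrite hE mul0r].

Definition Tl (p : hcoord C) : C := a * p.1.1 + b * p.1.2 - 2 * c * p.2.
Definition DL : conic C := double_line a b (- (2 * c)).

Lemma ev_DL p : conic_eval DL p = Tl p ^+ 2.
Proof. case: p => [[x y] z]; rewrite /conic_eval /Tl /=; ring. Qed.

Lemma ev_Cq p : conic_eval (Cq411 a b c) p = 2 * (b - c) ^+ 2 * conic_eval (C0 C) p + Tl p ^+ 2.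
Proof. case: p => [[x y] z]; rewrite /conic_eval /Tl /=; modE (- x ^+ 2). Qed.

Lemma f_eq (x y z : C) : conic_eval (C0 C) (x, y, z) = 0 -> x ^+ 2 + y ^+ 2 - 2 * z ^+ 2 = 0.
Proof. by move=> <-; rewrite /conic_eval /=; ring. Qed.

Lemma nzC (x : C) n : x != 0 -> (n.+1)%:R * x != 0.
Proof. by move=> h; rewrite mulf_neq0 // pnatr_eq0. Qed.

Lemma cancel0 (k x : C) : k != 0 -> k * x = 0 -> x = 0.
Proof. by move=> kn /eqP; rewrite mulf_eq0 (negbTE kn) => /eqP. Qed.

Lemma tangent p : p <> hzero C -> conic_eval (C0 C) p = 0 -> Tl p = 0 -> same_point (a, b, c) p.
Proof.
case: p => [[x y] z] pn /f_eq hF; rewrite /Tl /= => hT.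
have hxy : a * y - b * x = 0.
  apply: sq0; apply: (lc3 (c1 := x ^+ 2 + y ^+ 2) (c2 := 2 * c ^+ 2)
     (c3 := - (a * x + b * y + 2 * c * z)) _ hE hF hT); ring.
have [c0|cn] := eqVneq c 0.
  subst c.
  have an : a != 0.
    apply/eqP => a0; subst a; apply: hq; rewrite /hzero; congr (_, _, _).
    by apply: sq0; rewrite -hE; ring.
  have hy : y = b * x / a.
    by transitivity ((a * y - b * x + b * x) / a); [field | rewrite hxy add0r].
  have hz : z = 0.
    apply: sq0; apply: (cancel0 (nzC 1 (mulf_neq0 an an))).
    apply: (lc3 (c1 := x ^+ 2) (c2 := a * y + b * x) (c3 := - a ^+ 2) _ hE hxy hF); ring.
  have xn : x != 0.
    apply/eqP => x0; apply: pn; rewrite /hzero hz hy x0; congr (_, _, _); ring.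
  exists (x / a); first by rewrite mulf_neq0 // invr_eq0.
  by rewrite /= hz hy; congr (_, _, _); field.
have e1 : x * c - a * z = 0.
  apply: (cancel0 (nzC 1 cn)).
  apply: (lc3 (c1 := - b) (c2 := - x) (c3 := a) _ hxy hE hT); ring.
have e2 : y * c - b * z = 0.
  apply: (cancel0 (nzC 1 cn)).
  apply: (lc3 (c1 := a) (c2 := - y) (c3 := b) _ hxy hE hT); ring.
have hx : x = a * z / c.
  by transitivity ((x * c - a * z + a * z) / c); [field | rewrite e1 add0r].
have hy : y = b * z / c.
  by transitivity ((y * c - b * z + b * z) / c); [field | rewrite e2 add0r].
have zn : z != 0.
  apply/eqP => z0; apply: pn; rewrite /hzero hx hy z0; congr (_, _, _); ring.
exists (z / c); first by rewrite mulf_neq0 // invr_eq0.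
by rewrite /= hx hy; congr (_, _, _); field.
Qed.

Lemma conic_eta (Q : conic C) : Q = Conic (cxx Q) (cyy Q) (czz Q) (cxy Q) (cxz Q) (cyz Q).
Proof. by case: Q. Qed.

Lemma hq0 : conic_eval (C0 C) (a, b, c) = 0.
Proof. by rewrite -[RHS]hE /conic_eval /=; ring. Qed.

Lemma hTq : Tl (a, b, c) = 0.
Proof. by rewrite -[RHS]hE /Tl /=; ring. Qed.

Lemma meetsC0_gen (Q : conic C) g :
  (forall p, conic_eval Q p = g * conic_eval (C0 C) p + Tl p ^+ 2) -> meets_C0_only_at Q (a, b, c).
Proof.
move=> hQ p pn; split.
  case=> h1 h2; apply: tangent => //; apply: sq0.
  by move: h1; rewrite hQ h2 mulr0 add0r.
case=> k kn ->; cbn [fst snd].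
by rewrite !ev_scale hQ hq0 hTq; split; ring.
Qed.

Lemma pencil (Q : conic C) : meets_C0_only_at Q (a, b, c) -> exists l m : C,
  Q = Conic (l + m * a ^+ 2) (l + m * b ^+ 2) (- (2 * l) + m * (- (2 * c)) ^+ 2)
            (m * (2 * a * b)) (m * (2 * a * - (2 * c))) (m * (2 * b * - (2 * c))).
Proof.
move=> H.
have Qq : conic_eval Q (a, b, c) = 0.
  have : same_point (a, b, c) (a, b, c) by exists 1; [exact: oner_neq0 | rewrite /= !mul1r].
  by move/(H _ hq) => [].
have HF s t : conic_eval Q (pt s t) = 0 -> s * (a - c) = t * (b - c).
  move=> h.
  have [/andP [/eqP s0 /eqP t0] | hst] := boolP ((s == 0) && (t == 0)).
    by rewrite s0 t0 !mul0r.
  have nz : pt s t <> hzero C.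
    by apply: pt_nz => -[s0 t0]; move: hst; rewrite s0 t0 eqxx.
  have [k kn e] := (H _ nz).1 (conj h (pt_C0 s t)).
  move: e; rewrite /pt; cbn [fst snd] => -[ex ey ez].
  apply: (mulfI kn).
  transitivity (s * (k * a - k * c)); first ring.
  rewrite -ex -ez.
  transitivity (t * (k * b - k * c)); last ring.
  rewrite -ey -ez; ring.
have bcn : b - c != 0 by rewrite subr_eq0.
pose h r := conic_eval Q (pt ((b - c) * r) ((a - c) * r + 1)).
have hn r : h r != 0.
  apply/eqP => /HF e.
  have e2 : b - c = ((a - c) * r + 1) * (b - c) - (b - c) * r * (a - c) by ring.
  by move: bcn; rewrite e2 -e subrr eqxx.
have hc r : h r = h 0 := const_of_noroot (h := h) (poly_eval Q (b - c) (a - c) 1) hn r.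
pose ka := 2 * (2 * c - a - b).
have ep : pt (b - c) (a - c) = (ka * a, ka * b, ka * c).
  by rewrite /pt /ka; congr (_, _, _); modE (1 : C).
have hs0 : conic_eval Q (pt (b - c) (a - c)) = 0 by rewrite ep ev_scale Qq mulr0.
have key s t : conic_eval Q (pt s t) * (b - c) ^+ 4 = h 0 * (t * (b - c) - s * (a - c)) ^+ 4.
  have [m0|mn] := eqVneq (t * (b - c) - s * (a - c)) 0.
    have et : t = s / (b - c) * (a - c).
      transitivity ((t * (b - c) - s * (a - c) + s * (a - c)) / (b - c)); first by field.
      by rewrite m0 add0r; field.
    have es : s = s / (b - c) * (b - c) by field.
    have z4 : (0 : C) ^+ 4 = 0 by rewrite expr0n.
    rewrite m0 z4 mulr0.
    by rewrite et {1}es pt_hom hs0 mulr0 mul0r.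
  set m := t * (b - c) - s * (a - c) in mn *.
  have e1 : s = m / (b - c) * ((b - c) * (s / m)) by field; rewrite mn bcn.
  have e2 : t = m / (b - c) * ((a - c) * (s / m) + 1).
    have em : (a - c) * s + m = t * (b - c) by rewrite /m; ring.
    transitivity (((a - c) * s + m) / (b - c)); first by rewrite em; field.
    by field; rewrite ?mn ?bcn.
  rewrite {1}e1 {1}e2 pt_hom.
  have := hc (s / m); rewrite /h => ->.
  by field; rewrite ?mn ?bcn.
have Tpt s t : Tl (pt s t) * (b - c) ^+ 2 = (b - a - 2 * c) * (t * (b - c) - s * (a - c)) ^+ 2.
  by rewrite /Tl /pt; cbn [fst snd]; modE ((a - b) * s ^+ 2 - 2 * (b - c) * s * t).
have ben : b - a - 2 * c != 0.
  apply/eqP => hb.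
  have hac : (a + c) ^+ 2 = 0.
    by apply: (lc2 (c1 := 2^-1) (c2 := - 2^-1 * (b + a + 2 * c)) _ hE hb); field.
  have : b = c.
    transitivity ((b - a - 2 * c) + (a + c) + c); first ring.
    by rewrite hb (sq0 hac) !add0r.
  by move=> bc; move: hbc; rewrite bc eqxx.
pose mu := h 0 / (b - a - 2 * c) ^+ 2.
pose Rc := Conic (cxx Q - mu * a ^+ 2) (cyy Q - mu * b ^+ 2) (czz Q - mu * (- (2 * c)) ^+ 2)
   (cxy Q - mu * (2 * a * b)) (cxz Q - mu * (2 * a * - (2 * c))) (cyz Q - mu * (2 * b * - (2 * c))).
have evR p : conic_eval Rc p = conic_eval Q p - mu * Tl p ^+ 2.
  by case: p => [[x y] z]; rewrite /Rc /conic_eval /Tl; cbn [fst snd cxx cyy czz cxy cxz cyz]; ring.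
have hR s t : conic_eval Rc (pt s t) = 0.
  apply: (cancel0 (k := (b - c) ^+ 4)); first by rewrite expf_neq0.
  rewrite evR.
  transitivity (conic_eval Q (pt s t) * (b - c) ^+ 4 - mu * (Tl (pt s t) * (b - c) ^+ 2) ^+ 2);
    first ring.
  by rewrite key Tpt /mu; field; rewrite ?ben ?bcn.
have [e1 e2 e3 e4 e5] := ker hR.
move: e1 e2 e3 e4 e5; rewrite /Rc; cbn [cxx cyy czz cxy cxz cyz] => e1 e2 e3 e4 e5.
exists (cxx Q - mu * a ^+ 2), mu.
rewrite {1}(conic_eta Q); congr Conic.
- ring.
- by rewrite -e1; ring.
- by rewrite -e2; ring.
- by apply/eqP; rewrite -subr_eq0 e3.
- by apply/eqP; rewrite -subr_eq0 e4.
- by apply/eqP; rewrite -subr_eq0 e5.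
Qed.

Lemma H0form (Q : conic C) x y : conic_eval Q (x, y, y) =
  cxx Q * x ^+ 2 + (cxy Q + cxz Q) * x * y + (cyy Q + czz Q + cyz Q) * y ^+ 2.
Proof. rewrite /conic_eval; ring. Qed.

Lemma forward (Q : conic C) : conic_nonzero Q -> meets_C0_only_at Q (a, b, c) ->
  (exists p0, meets_H0_only_at Q p0) -> same_conic DL Q \/ same_conic (Cq411 a b c) Q.
Proof.
move=> hnz /pencil [l [m eQ]] [p0 hp0].
have D := disc0 (H0form Q) hp0.
rewrite eQ in D; cbn [cxx cyy czz cxy cxz cyz] in D.
have hD : 4 * l * (l - 2 * (b - c) ^+ 2 * m) = 0.
  by apply: (lc2 (c1 := 1) (c2 := - (4 * l * m)) _ D hE); ring.
have mn : l = 0 -> m != 0.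
  move=> l0; apply/eqP => m0; apply: hnz; rewrite eQ l0 m0; cbn [cxx cyy czz cxy cxz cyz].
  by split; [ring | split; [ring | split; [ring | split; [ring | split; ring]]]].
move/eqP: hD; rewrite !mulf_eq0 pnatr_eq0 /= => /orP [/eqP l0 | /eqP hl].
  left; exists m; first exact: mn.
  by rewrite eQ l0 /conic_scale /DL /double_line; cbn [cxx cyy czz cxy cxz cyz]; congr Conic; ring.
have hl' : l = 2 * (b - c) ^+ 2 * m by apply/eqP; rewrite -subr_eq0 hl.
right; exists m.
  apply/eqP => m0; move: (mn); rewrite hl' m0 mulr0 => /(_ erefl); rewrite eqxx.
  done.
rewrite eQ hl' /conic_scale /Cq411; cbn [cxx cyy czz cxy cxz cyz]; congr Conic; try ring.
modE m.
Qed.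

Lemma nzab : ~ (a = 0 /\ b - 2 * c = 0).
Proof.
case=> a0 hb.
have c0 : c = 0.
  apply: sq0; apply: (lc2 (c1 := 2^-1) (c2 := - 2^-1 * (b + 2 * c)) _ hE hb).
  by rewrite a0; field.
have b0 : b = 0 by move: hb; rewrite c0 mulr0 subr0.
by apply: hq; rewrite /hzero a0 b0 c0.
Qed.

Lemma DLH : meets_H0_only_at DL (2 * c - b, a, a) /\ ~ contains_H0 DL.
Proof.
have := @H0_gen R DL a (b - 2 * c) _ nzab; rewrite opprB; apply.
by move=> x y; rewrite ev_DL /Tl; cbn [fst snd]; ring.
Qed.

Lemma CqH : meets_H0_only_at (Cq411 a b c) (a, 2 * c - b, 2 * c - b) /\ ~ contains_H0 (Cq411 a b c).
Proof.
have nz : ~ (2 * c - b = 0 /\ - a = 0).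
  case=> h1 h2; apply: nzab; split.
    by rewrite -[a]opprK h2 oppr0.
  by rewrite -opprB h1 oppr0.
have := @H0_gen R (Cq411 a b c) (2 * c - b) (- a) _ nz; rewrite opprK; apply.
by move=> x y; rewrite /conic_eval /=; modE (- y ^+ 2).
Qed.

Lemma DLC0 : meets_C0_only_at DL (a, b, c).
Proof. by apply: (meetsC0_gen (g := 0)) => p; rewrite ev_DL mul0r add0r. Qed.

Lemma CqC0 : meets_C0_only_at (Cq411 a b c) (a, b, c).
Proof. exact: meetsC0_gen ev_Cq. Qed.

Lemma main_sec :
  (forall Q : conic C, conic_nonzero Q ->
     (meets_C0_only_at Q (a, b, c) /\
      (exists p0 : hcoord C, meets_H0_only_at Q p0) /\ ~ contains_H0 Q)
     <->
     (same_conic (double_line a b (- (2 * c))) Q \/ same_conic (Cq411 a b c) Q))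
  /\ meets_H0_only_at (double_line a b (- (2 * c))) (2 * c - b, a, a)
  /\ meets_H0_only_at (Cq411 a b c) (a, 2 * c - b, 2 * c - b).
Proof.
split; last by split; [exact: DLH.1 | exact: CqH.1].
move=> Q hnz; split.
  by case=> hC [hH _]; exact: forward.
case=> -[k kn ->].
  split; first exact: scale_C0 kn DLC0.
  split; last exact: scale_cont kn DLH.2.
  by exists (2 * c - b, a, a); apply: scale_H0 kn DLH.1.
split; first exact: scale_C0 kn CqC0.
split; last exact: scale_cont kn CqH.2.
by exists (a, 2 * c - b, 2 * c - b); apply: scale_H0 kn CqH.1.
Qed.

End Main.

Theorem lemmaB7 (R : realType) (a b c : R[i]) :
  (a, b, c) <> hzero R[i] ->
  conic_eval (C0 R[i]) (a, b, c) = 0 ->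
  b != c ->
  (forall Q : conic R[i], conic_nonzero Q ->
     (meets_C0_only_at Q (a, b, c) /\
      (exists p0 : hcoord R[i], meets_H0_only_at Q p0) /\ ~ contains_H0 Q)
     <->
     (same_conic (double_line a b (- (2 * c))) Q \/ same_conic (Cq411 a b c) Q))
  /\ meets_H0_only_at (double_line a b (- (2 * c))) (2 * c - b, a, a)
  /\ meets_H0_only_at (Cq411 a b c) (a, 2 * c - b, 2 * c - b).
Proof.
move=> hq h0 hbc.
exact: (main_sec hq (f_eq h0) hbc).
Qed.
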